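(* Let $\mathcal{F}$ be a family of finite subsets of $\mathbb{N}$ with $\bigcup\mathcal{F}=\mathbb{N}$, and assume $\mathcal{F}$ is convergence enforcing. Then there is a finite constant $C=C(\mathcal{F})$ such that for every sequence $(a_i)_{i\in\mathbb{N}}$ of nonnegative reals: if $\sum_{i\in A}a_i\le1$ for all $A\in\mathcal{F}$, then $\sum_{i\in\mathbb{N}}a_i\le C$.
   Context: A family $\mathcal{F}$ of finite subsets of $\mathbb{N}=\{1,2,\ldots\}$ is convergence enforcing if for every sequence $(a_i)_{i\in\mathbb{N}}$ of nonnegative reals: if $\sum_{i\in A}a_i\le1$ for all $A\in\mathcal{F}$, then $\sum_{i\in\mathbb{N}}a_i<\infty$. *)

(* Defs.v *)
From Stdlib Require Import Reals List.
From Coquelicot Require Import Coquelicot.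
Import ListNotations.
Open Scope R_scope.

(* Indices range over N = {1,2,...}; a sequence is a : nat -> R whose value
   at 0 is ignored. A finite subset of N is represented by a duplicate-free
   list of positive naturals; a family of finite subsets is a predicate on
   such lists (only well-formed lists count as members). *)
Definition finset_N (A : list nat) : Prop :=
  NoDup A /\ (forall i, In i A -> (1 <= i)%nat).

Definition set_family := list nat -> Prop.

Definition member (F : set_family) (A : list nat) : Prop := F A /\ finset_N A.

Definition sum_over (a : nat -> R) (A : list nat) : R :=
  fold_right (fun i s => a i + s) 0 A.

Definition psum (a : nat -> R) (n : nat) : R := sum_n (fun k => a (S k)) n.

(* The (extended-real) value of sum_{i in N} a_i; for nonnegative a the
   partial sums are nondecreasing, so this limit exists in Rbar. *)
Definition total_sum (a : nat -> R) : Rbar := Lim_seq (fun n => psum a n).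

Definition nonneg_seq (a : nat -> R) : Prop := forall i, (1 <= i)%nat -> 0 <= a i.

Definition admissible (F : set_family) (a : nat -> R) : Prop :=
  nonneg_seq a /\ forall A, member F A -> sum_over a A <= 1.

Definition convergence_enforcing (F : set_family) : Prop :=
  forall a, admissible F a -> Rbar_lt (total_sum a) p_infty.

Definition covers_N (F : set_family) : Prop :=
  forall i, (1 <= i)%nat -> exists A, member F A /\ In i A.

(* Main.v *)
Require Import Defs.
From Stdlib Require Import Reals List Lra Lia Classical ClassicalEpsilon FunctionalExtensionality.
From Coquelicot Require Import Coquelicot.
Open Scope R_scope.

Lemma Series_zero : Series (fun _ => 0) = 0.
Proof.
  transitivity (0 * Series (fun _ : nat => 0)); [|ring].
  rewrite <- Series_scal_l. apply Series_ext; intros; ring.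
Qed.

Definition w (n : nat) : R := / 2 * (/ 2) ^ n.

Lemma w_pos n : 0 < w n.
Proof. unfold w. apply Rmult_lt_0_compat. lra. apply pow_lt. lra. Qed.

Lemma is_series_w : is_series w 1.
Proof.
  unfold w. replace 1 with (/2 * / (1 - /2)) by field.
  apply (is_series_scal_l (/2) (fun n => (/2)^n)).
  apply is_series_geom. rewrite Rabs_pos_eq; lra.
Qed.

Lemma ex_series_w : ex_series w.
Proof. exists 1. apply is_series_w. Qed.

Lemma Series_w : Series w = 1.
Proof. apply is_series_unique, is_series_w. Qed.

Lemma ex_series_zero : ex_series (fun _ : nat => 0).
Proof.
  apply (ex_series_le (fun _ : nat => 0) w); [|apply ex_series_w].
  intros n. change (norm (0:R)) with (Rabs 0). rewrite Rabs_R0. left; apply w_pos.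
Qed.

Lemma ser_sum_over (f : nat -> nat -> R) (L : list nat) :
  (forall i, In i L -> ex_series (fun n => f n i)) ->
  ex_series (fun n => sum_over (f n) L) /\
  Series (fun n => sum_over (f n) L) = sum_over (fun i => Series (fun n => f n i)) L.
Proof.
  induction L as [|x L IH]; intros H; simpl.
  - split. apply ex_series_zero. apply Series_zero.
  - destruct IH as [IH1 IH2]. intros i Hi; apply H; simpl; auto.
    assert (Hx : ex_series (fun n => f n x)) by (apply H; simpl; auto).
    split.
    + apply (ex_series_plus (fun n => f n x) (fun n => sum_over (f n) L)); auto.
    + rewrite (Series_plus (fun n => f n x) (fun n => sum_over (f n) L)); auto.
      rewrite <- IH2. reflexivity.
Qed.

Lemma ser_psum (f : nat -> nat -> R) (N : nat) :
  (forall i, (1 <= i)%nat -> ex_series (fun n => f n i)) ->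
  ex_series (fun n => psum (f n) N) /\
  Series (fun n => psum (f n) N) = psum (fun i => Series (fun n => f n i)) N.
Proof.
  intros H. unfold psum. induction N as [|N [IH1 IH2]].
  - split.
    + apply (ex_series_ext (fun n => f n 1%nat)). intros; rewrite sum_O; reflexivity. apply H; lia.
    + rewrite sum_O. apply Series_ext; intros; rewrite sum_O; reflexivity.
  - assert (E: forall n, sum_n (fun k => f n (S k)) (S N) = sum_n (fun k => f n (S k)) N + f n (S (S N)))
      by (intros; rewrite sum_Sn; reflexivity).
    assert (Hx : ex_series (fun n => f n (S (S N)))) by (apply H; lia).
    split.
    + eapply ex_series_ext. intros; symmetry; apply E.
      apply (ex_series_plus (fun n => sum_n (fun k => f n (S k)) N) (fun n => f n (S (S N)))); auto.
    + rewrite (Series_ext _ _ E). rewrite Series_plus; auto. rewrite IH2, sum_Sn. reflexivity.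
Qed.

Lemma sum_over_nonneg a L : (forall i, In i L -> 0 <= a i) -> 0 <= sum_over a L.
Proof.
  induction L; simpl; intros H. lra.
  assert (0 <= a a0) by auto. assert (0 <= sum_over a L) by auto. lra.
Qed.

Lemma sum_over_ge a L i : (forall j, In j L -> 0 <= a j) -> In i L -> a i <= sum_over a L.
Proof.
  induction L; simpl; intros H Hi. destruct Hi.
  destruct Hi as [<-|Hi].
  - assert (0 <= sum_over a L) by (apply sum_over_nonneg; auto). lra.
  - assert (0 <= a a0) by auto. assert (a i <= sum_over a L) by auto. lra.
Qed.

Lemma psum_mono a N M : nonneg_seq a -> (N <= M)%nat -> psum a N <= psum a M.
Proof.
  intros Ha H. induction H. lra.
  unfold psum in *. rewrite sum_Sn. change plus with Rplus.
  assert (0 <= a (S (S m))) by (apply Ha; lia). lra.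
Qed.

Lemma psum_nonneg a N : nonneg_seq a -> 0 <= psum a N.
Proof.
  intros Ha. induction N; unfold psum in *. rewrite sum_O. apply Ha; lia.
  rewrite sum_Sn. change plus with Rplus.
  assert (0 <= a (S (S N))) by (apply Ha; lia). lra.
Qed.

Lemma Series_ge_term u M : (forall n, 0 <= u n) -> ex_series u -> u M <= Series u.
Proof.
  intros Hu Hex. rewrite (Series_incr_n u (S M)); [|lia|auto]. simpl pred.
  assert (H1 : 0 <= Series (fun k => u (S M + k)%nat)).
  { rewrite <- Series_zero. apply Series_le. intros; split; [lra|auto].
    apply (ex_series_incr_n u (S M)); auto. }
  assert (H2 : u M <= sum_f_R0 u M).
  { destruct M. simpl; lra. simpl. pose proof (cond_pos_sum u M Hu). lra. }
  lra.
Qed.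

Lemma Lim_le_of_bound a C : (forall N, psum a N <= C) -> Rbar_le (total_sum a) C.
Proof.
  intros H. unfold total_sum. rewrite <- (Lim_seq_const C).
  apply Lim_seq_le_loc. exists 0%nat. intros; auto.
Qed.

Lemma Lim_ge_term a N : nonneg_seq a -> Rbar_le (psum a N) (total_sum a).
Proof.
  intros Ha. unfold total_sum. rewrite <- (Lim_seq_const (psum a N)) at 1.
  apply Lim_seq_le_loc. exists N. intros; apply psum_mono; auto.
Qed.

Theorem proposition4p2 (F : set_family) :
  covers_N F -> convergence_enforcing F ->
  exists C : R, forall a : nat -> R,
    admissible F a -> Rbar_le (total_sum a) (Finite C).
Proof.
  intros Hcov Hce. apply NNPP. intros Hno.
  assert (Hk : forall k : nat, exists a, admissible F a /\
             exists N, INR k * 2 ^ S k < psum a N).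
  { intros k. apply NNPP. intros Hn. apply Hno. exists (INR k * 2 ^ S k).
    intros a Ha. apply Lim_le_of_bound. intros N.
    apply Rnot_lt_le. intros Hl. apply Hn. exists a. split; auto. exists N; auto. }
  set (A := fun k => proj1_sig (constructive_indefinite_description _ (Hk k))).
  assert (HA : forall k, admissible F (A k) /\ exists N, INR k * 2 ^ S k < psum (A k) N).
  { intros k. unfold A. destruct (constructive_indefinite_description _ (Hk k)); auto. }
  clearbody A.
  assert (Hle1 : forall k i, (1 <= i)%nat -> 0 <= A k i <= 1).
  { intros k i Hi. destruct (HA k) as [[Hn Hs] _]. split. apply Hn; auto.
    destruct (Hcov i Hi) as [L [HL HiL]].
    apply Rle_trans with (sum_over (A k) L); [|apply Hs; auto].
    apply sum_over_ge; auto. intros j Hj. apply Hn. destruct HL as [_ [_ HL]]. auto. }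
  set (f := fun n i => w n * A n i).
  assert (Hf : forall i, (1 <= i)%nat -> ex_series (fun n => f n i)).
  { intros i Hi. apply (@ex_series_le R_AbsRing R_CompleteNormedModule (fun n => f n i) w); [|apply ex_series_w].
    intros n. change (norm (f n i)) with (Rabs (f n i)). unfold f.
    destruct (Hle1 n i Hi). pose proof (w_pos n).
    rewrite Rabs_pos_eq. 2: apply Rmult_le_pos; lra.
    rewrite <- (Rmult_1_r (w n)) at 2. apply Rmult_le_compat_l; lra. }
  set (b := fun i => Series (fun n => f n i)).
  assert (Hfpos : forall n i, (1 <= i)%nat -> 0 <= f n i).
  { intros n i Hi. unfold f. destruct (Hle1 n i Hi). pose proof (w_pos n).
    apply Rmult_le_pos; lra. }
  assert (Hbn : nonneg_seq b).
  { intros i Hi. unfold b. rewrite <- Series_zero. apply Series_le; auto.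
    intros n; split; [lra|auto]. }
  assert (Hadm : admissible F b).
  { split; auto. intros L HL. destruct HL as [HL [Hnd Hpos]].
    destruct (ser_sum_over f L) as [_ E]; [intros; apply Hf; auto|].
    unfold b. rewrite <- E. rewrite <- Series_w. apply Series_le; [|apply ex_series_w].
    intros n. unfold f. split.
    - apply sum_over_nonneg. intros j Hj. apply Hfpos; auto.
    - assert (sum_over (fun i => w n * A n i) L = w n * sum_over (A n) L) as ->.
      { clear. induction L; simpl. ring. rewrite IHL. ring. }
      destruct (HA n) as [[_ Hs] _]. pose proof (w_pos n).
      rewrite <- (Rmult_1_r (w n)) at 2. apply Rmult_le_compat_l; [lra|].
      apply Hs; split; auto; split; auto. }
  assert (Hbig : forall M : R, Rbar_le M (total_sum b)).
  { intros M. destruct (INR_unbounded M) as [k Hk'].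
    destruct (HA k) as [[Hn _] [N HN]].
    eapply Rbar_le_trans; [|apply (Lim_ge_term b N Hbn)].
    simpl. destruct (ser_psum f N Hf) as [Hex E].
    unfold b. rewrite <- E.
    apply Rle_trans with (psum (f k) N).
    - assert (psum (f k) N = w k * psum (A k) N) as E2.
      { unfold f, psum. clear. induction N. rewrite !sum_O; ring.
        rewrite !sum_Sn. change plus with Rplus. rewrite IHN. ring. }
      rewrite E2. assert (w k * (INR k * 2 ^ S k) = INR k) as E3.
      { unfold w. simpl. rewrite pow_inv. field. apply pow_nonzero. lra. }
      pose proof (w_pos k). nra.
    - apply (Series_ge_term (fun n => psum (f n) N) k); auto.
      intros n. unfold psum. clear -Hfpos. induction N. rewrite sum_O. apply Hfpos; lia.
      rewrite sum_Sn. change plus with Rplus. assert (0 <= f n (S (S N))) by (apply Hfpos; lia). lra. }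
  specialize (Hce b Hadm). destruct (total_sum b) eqn:Et.
  - specialize (Hbig (r + 1)). simpl in Hbig. lra.
  - exact Hce.
  - specialize (Hbig 0). exact Hbig.
Qed.
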